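(* Let $S$ be a Rauzy scheme for a recurrent infinite word $W$, and let $u$ be a bispecial factor of $W$ such that $F(l_1)\sqsubseteq u$ for some symmetric path $l_1$ of $S$. Then there is a symmetric path $l$ in $S$ with $F(l)=u$.
   Context: A factor $u$ of $W$ is right special if there are distinct letters $a\ne b$ with $ua$ and $ub$ factors of $W$, left special if there are distinct letters $a\ne b$ with $au,bu$ factors of $W$, and bispecial if it is both. An infinite word is recurrent if every factor occurs infinitely often. $u\sqsubseteq w$: $u$ is a factor of $w$; $u\sqsubseteq_k w$: $u$ occurs in $w$ at least $k$ times. A graph with words is a strongly connected finite directed graph (multiple edges and loops allowed) in which every edge $e$ carries a front word $F(e)$ and a back word $B(e)$, and every vertex either has in-degree $1$ and out-degree $>1$ (distributing vertex) or in-degree $>1$ and out-degree $1$ (collecting vertex). A path is a finite nonempty sequence of edges $v_1\dots v_n$ with each $v_{i+1}$ starting where $v_i$ ends; subpaths and $s_1\sqsubseteq_k s_2$ are defined via edge records. A path is symmetric if its first edge starts at a collecting vertex and its last edge ends at a distributing vertex. For $s=v_1\dots v_n$, $F(s)$ is the concatenation, in order, of the front words of $v_1$ and of all $v_i$ ($i\ge2$) starting at a distributing vertex; $B(s)$ is the concatenation, in order, of the back words of all $v_i$ ($i\le n-1$) ending at a collecting vertex and of $v_n$. A Rauzy scheme for $W$ is a graph with words such that: (1) it has more than one edge; (2) front words of edges leaving a common distributing vertex have pairwise distinct first letters, and back words of edges entering a common collecting vertex have pairwise distinct last letters; (3) $F(s)=B(s)$ for every symmetric path $s$; (4) for symmetric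 paths $s_1,s_2$ and $k\ge1$, $F(s_1)\sqsubseteq_k F(s_2)$ implies $s_1\sqsubseteq_k s_2$; (5) all words on edges are factors of $W$; (6) every factor of $W$ is a factor of $F(s)$ for some symmetric path $s$; (7) for every edge $e$ there is a factor $u_e$ of $W$ such that every symmetric path $s$ with $u_e\sqsubseteq F(s)$ passes through $e$. *)

(* Defs.v *)
From mathcomp Require Import all_boot.
Set Implicit Arguments. Unset Strict Implicit. Unset Printing Implicit Defensive.

Section Words.
Variable T : eqType.

Definition occ (u w : seq T) : nat :=
  count (fun i => take (size u) (drop i w) == u) (iota 0 (size w - size u).+1).

Definition occurs_k (u w : seq T) (k : nat) : Prop := k <= occ u w.
Definition subword (u w : seq T) : Prop := 1 <= occ u w.

(* pairwise distinct first / last letters (both words must be nonempty) *)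
Definition diff_first (x y : seq T) : bool :=
  match ohead x, ohead y with Some a, Some b => a != b | _, _ => false end.
Definition diff_last (x y : seq T) : bool := diff_first (rev x) (rev y).
End Words.

Section InfWords.
Variable A : eqType.
Implicit Type W : nat -> A.

Definition occurs_at W (u : seq A) (i : nat) : Prop :=
  u = mkseq (fun k => W (i + k)) (size u).
Definition factor W (u : seq A) : Prop := exists i, occurs_at W u i.
Definition recurrent W : Prop :=
  forall u, factor W u -> forall N, exists i, N <= i /\ occurs_at W u i.
Definition right_special W (u : seq A) : Prop :=
  exists a b : A, a != b /\ factor W (rcons u a) /\ factor W (rcons u b).
Definition left_special W (u : seq A) : Prop :=
  exists a b : A, a != b /\ factor W (a :: u) /\ factor W (b :: u).
Definition bispecial W u : Prop := right_special W u /\ left_special W u.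
End InfWords.

Record gww (A : eqType) := GWW {
  gV : finType;
  gE : finType;
  gsrc : gE -> gV;
  gtgt : gE -> gV;
  gF : gE -> seq A;
  gB : gE -> seq A }.

Section Graph.
Variables (A : eqType) (G : gww A).
Local Notation V := (gV G).
Local Notation E := (gE G).
Local Notation src := (@gsrc A G).
Local Notation tgt := (@gtgt A G).

Definition indeg (v : V) : nat := #|[pred e : E | tgt e == v]|.
Definition outdeg (v : V) : nat := #|[pred e : E | src e == v]|.
Definition distributing (v : V) : bool := (indeg v == 1) && (1 < outdeg v).
Definition collecting (v : V) : bool := (1 < indeg v) && (outdeg v == 1).

Definition adj : rel V := fun x y => [exists e : E, (src e == x) && (tgt e == y)].
Definition strongly_connected : Prop := forall v w : V, connect adj v w.

Definition is_graph_with_words : Prop :=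
  strongly_connected /\ forall v : V, distributing v || collecting v.

Definition is_path (s : seq E) : bool :=
  if s is e :: s' then path (fun e f => tgt e == src f) e s' else false.

Definition sym_path (s : seq E) : bool :=
  if s is e :: s' then
    [&& is_path s, collecting (src e) & distributing (tgt (last e s'))]
  else false.

Definition Fpath (s : seq E) : seq A :=
  if s is e :: s' then
    gF e ++ flatten [seq gF f | f <- s' & distributing (src f)]
  else [::].

Definition Bpath (s : seq E) : seq A :=
  if s is e :: s' then
    flatten [seq gB f | f <- belast e s' & collecting (tgt f)] ++ gB (last e s')
  else [::].
End Graph.

Definition is_rauzy_scheme (A : eqType) (W : nat -> A) (G : gww A) : Prop :=
  is_graph_with_words G /\
      1 < #|gE G| /\
      (* (2) *) (forall e1 e2 : gE G, e1 != e2 ->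
                   gsrc e1 = gsrc e2 -> distributing (gsrc e1) ->
                   diff_first (gF e1) (gF e2)) /\
                (forall e1 e2 : gE G, e1 != e2 ->
                   gtgt e1 = gtgt e2 -> collecting (gtgt e1) ->
                   diff_last (gB e1) (gB e2)) /\
      (* (3) *) (forall s : seq (gE G), sym_path s -> Fpath s = Bpath s) /\
      (* (4) *) (forall (s1 s2 : seq (gE G)) (k : nat), sym_path s1 -> sym_path s2 ->
                   1 <= k -> occurs_k (Fpath s1) (Fpath s2) k -> occurs_k s1 s2 k) /\
      (forall e : gE G, factor W (gF e) /\ factor W (gB e)) /\
      (* (6) *) (forall u, factor W u -> exists s : seq (gE G), sym_path s /\ subword u (Fpath s)) /\
    (forall e : gE G, exists ue, factor W ue /\
                   forall s : seq (gE G), sym_path s -> subword ue (Fpath s) -> e \in s).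

(* Main.v *)
Require Import Defs.
From mathcomp Require Import all_boot.
From mathcomp Require Import zify.
Set Implicit Arguments. Unset Strict Implicit. Unset Printing Implicit Defensive.

Lemma subwordP (T : eqType) (u w : seq T) :
  subword u w <-> exists x y, w = x ++ u ++ y.
Proof.
rewrite /subword /occ; split.
- rewrite -has_count => /hasP [i Hi /eqP Ht].
  exists (take i w), (drop (size u) (drop i w)).
  by rewrite -{1}(cat_take_drop i w) -{1}(cat_take_drop (size u) (drop i w)) Ht.
- case=> x [y ->]; rewrite -has_count; apply/hasP; exists (size x).
    rewrite mem_iota !size_cat; lia.
  by rewrite drop_size_cat // take_size_cat.
Qed.

Lemma cat_cancel (T : eqType) (x1 x2 y1 y2 : seq T) :
  size x1 = size x2 -> x1 ++ y1 = x2 ++ y2 -> x1 = x2 /\ y1 = y2.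
Proof. by move=> Hs /eqP; rewrite eqseq_cat // => /andP[/eqP -> /eqP ->]. Qed.

Lemma cat_prefix (T : eqType) (x1 x2 y1 y2 : seq T) :
  size x1 <= size x2 -> x1 ++ y1 = x2 ++ y2 -> exists z, x2 = x1 ++ z.
Proof.
move=> Hs E; exists (drop (size x1) x2).
have : take (size x1) (x1 ++ y1) = take (size x1) (x2 ++ y2) by rewrite E.
rewrite take_size_cat // takel_cat // => E'.
by rewrite {1}E' cat_take_drop.
Qed.

Lemma card_gt1_other (T : finType) (P : pred T) (x : T) :
  1 < #|P| -> exists y, y \in P /\ y != x.
Proof.
move=> H; case: (pickP [pred y | (y \in P) && (y != x)]) => [y /andP[]|H0].
  by exists y.
move: H; rewrite (cardD1 x) (@eq_card0 _ [predD1 P & x]) ?addn0.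
  by case: (x \in P).
move=> y; rewrite !inE; have := H0 y; rewrite /= andbC => ->; by [].
Qed.

Definition incw (A : eqType) (G : gww A) (s : seq (gE G)) : seq A :=
  flatten [seq gF f | f <- s & distributing (gsrc f)].
Definition decw (A : eqType) (G : gww A) (s : seq (gE G)) : seq A :=
  flatten [seq gB f | f <- s & collecting (gtgt f)].
Definition Rg (A : eqType) (G : gww A) : rel (gE G) := fun e f => gtgt e == gsrc f.

Lemma incw_cat (A : eqType) (G : gww A) (s1 s2 : seq (gE G)) :
  incw (s1 ++ s2) = incw s1 ++ incw s2.
Proof. by rewrite /incw filter_cat map_cat flatten_cat. Qed.
Lemma decw_cat (A : eqType) (G : gww A) (s1 s2 : seq (gE G)) :
  decw (s1 ++ s2) = decw s1 ++ decw s2.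
Proof. by rewrite /decw filter_cat map_cat flatten_cat. Qed.

Lemma Fpath_cons (A : eqType) (G : gww A) (e : gE G) s : Fpath (e :: s) = gF e ++ incw s.
Proof. by []. Qed.
Lemma Bpath_cons (A : eqType) (G : gww A) (e : gE G) s :
  Bpath (e :: s) = decw (belast e s) ++ gB (last e s).
Proof. by []. Qed.
Lemma is_path_cons (A : eqType) (G : gww A) (e : gE G) s : is_path (e :: s) = path (@Rg A G) e s.
Proof. by []. Qed.
Lemma sym_path_cons (A : eqType) (G : gww A) (e : gE G) s : sym_path (e :: s) =
  [&& path (@Rg A G) e s, collecting (gsrc e) & distributing (gtgt (last e s))].
Proof. by []. Qed.

Lemma Fpath_cat (A : eqType) (G : gww A) (s1 s2 : seq (gE G)) :
  s1 != [::] -> Fpath (s1 ++ s2) = Fpath s1 ++ incw s2.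
Proof. case: s1 => [//|e s1] _; by rewrite cat_cons !Fpath_cons incw_cat catA. Qed.

Lemma Fpath_left (A : eqType) (G : gww A) (p q : seq (gE G)) :
  p != [::] -> q != [::] -> Fpath (p ++ q) = Bpath (p ++ q) -> Fpath q = Bpath q ->
  Fpath (p ++ q) = decw p ++ Fpath q.
Proof.
case: p => [//|e p] _; case: q => [//|q1 q] _ -> ->.
rewrite cat_cons !Bpath_cons belast_cat last_cat.
have -> : belast (last e p) (q1 :: q) = last e p :: belast q1 q by [].
have -> : last (last e p) (q1 :: q) = last q1 q by [].
by rewrite -cat_rcons -lastI !decw_cat catA.
Qed.

Lemma sym_suffix (A : eqType) (G : gww A) (p q : seq (gE G)) q1 :
  sym_path (p ++ q1 :: q) -> collecting (gsrc q1) -> sym_path (q1 :: q).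
Proof.
case: p => [//|e p]; rewrite cat_cons !sym_path_cons cat_path last_cat /=.
by case/and3P => /and3P[_ _ ->] _ -> ->.
Qed.

Lemma sym_prefix (A : eqType) (G : gww A) (p q : seq (gE G)) e :
  sym_path ((e :: p) ++ q) -> distributing (gtgt (last e p)) -> sym_path (e :: p).
Proof.
rewrite cat_cons !sym_path_cons cat_path.
move=> /and3P[/andP[H1 _] H2 _] H3. by rewrite H1 H2 H3.
Qed.

Lemma sym_infix (A : eqType) (G : gww A) (p x r : seq (gE G)) x1 :
  sym_path (p ++ (x1 :: x) ++ r) -> collecting (gsrc x1) ->
  distributing (gtgt (last x1 x)) -> sym_path (x1 :: x).
Proof. move=> H Hc Hd; apply: (@sym_prefix _ _ _ r) => //; exact: sym_suffix H Hc. Qed.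

Lemma path_link (A : eqType) (G : gww A) (p q : seq (gE G)) e q1 :
  is_path ((e :: p) ++ q1 :: q) -> gtgt (last e p) = gsrc q1.
Proof. by rewrite cat_cons is_path_cons cat_path /= => /and3P[_ /eqP]. Qed.

Lemma path_mid (A : eqType) (G : gww A) (p x r : seq (gE G)) x1 :
  is_path (p ++ (x1 :: x) ++ r) -> path (@Rg A G) x1 x.
Proof.
case: p => [|e p].
  by rewrite cat0s cat_cons is_path_cons cat_path => /andP[].
rewrite cat_cons is_path_cons cat_path => /andP[_].
by rewrite cat_cons /= cat_path => /andP[_ /andP[]].
Qed.

Lemma F_nonempty (A : eqType) (W : nat -> A) (G : gww A) (Hrs : is_rauzy_scheme W G)
  (e : gE G) : distributing (gsrc e) -> gF e != [::].
Proof.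
case: Hrs => _ [_ [H2a _]].
move=> Hd; have := Hd; rewrite /distributing /outdeg => /andP[_ H].
have [f [Hf Hfe]] := card_gt1_other e H.
move: Hf; rewrite inE => /eqP Hf.
have := H2a e f; rewrite eq_sym Hfe Hf => /(_ isT erefl).
move=> /(_ Hd); rewrite /diff_first; by case: (gF e).
Qed.

Lemma B_nonempty (A : eqType) (W : nat -> A) (G : gww A) (Hrs : is_rauzy_scheme W G)
  (e : gE G) : collecting (gtgt e) -> gB e != [::].
Proof.
case: Hrs => _ [_ [_ [H2b _]]].
move=> Hd; have := Hd; rewrite /collecting /indeg => /andP[H _].
have [f [Hf Hfe]] := card_gt1_other e H.
move: Hf; rewrite inE => /eqP Hf.
have := H2b e f; rewrite eq_sym Hfe Hf => /(_ isT erefl).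
move=> /(_ Hd); rewrite /diff_last /diff_first; by case: (gB e).
Qed.

Lemma F_decomp (A : eqType) (W : nat -> A) (G : gww A) (Hrs : is_rauzy_scheme W G)
  (p l r : seq (gE G)) : sym_path (p ++ l ++ r) -> sym_path l ->
  Fpath (p ++ l ++ r) = decw p ++ Fpath l ++ incw r.
Proof.
case: Hrs => _ [_ [_ [_ [H3 _]]]].
case: l => [//|l1 l] Hs Hl.
case: p Hs => [|e p] Hs.
  by rewrite !cat0s Fpath_cat.
have Hc : collecting (gsrc l1) by case/and3P: Hl.
have Hlr : sym_path ((l1 :: l) ++ r) by apply: (sym_suffix (p := e :: p)).
rewrite Fpath_left //; last exact: H3.
- by rewrite Fpath_cat.
- exact: H3.
Qed.

Lemma split_last_coll (A : eqType) (G : gww A) (p : seq (gE G)) :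
  has (fun f => collecting (gsrc f)) p ->
  exists p1 q1 q, p = p1 ++ q1 :: q /\ collecting (gsrc q1) /\
    all (fun f => ~~ collecting (gsrc f)) q.
Proof.
elim: p => [//|e p IH] /=.
case Hp: (has _ p).
  case: (IH Hp) => p1 [q1 [q [-> [H1 H2]]]] _.
  by exists (e :: p1), q1, q.
rewrite orbF => He; exists [::], e, p; split => //; split => //.
apply/allP => f Hf; apply/negP => Hc.
by move/negbT: Hp => /hasPn/(_ f Hf); rewrite Hc.
Qed.

Lemma split_first_dist (A : eqType) (G : gww A) (r : seq (gE G)) :
  has (fun f => distributing (gtgt f)) r ->
  exists r1 qt r2, r = (r1 :: qt) ++ r2 /\ distributing (gtgt (last r1 qt)) /\
    all (fun f => ~~ distributing (gtgt f)) (belast r1 qt).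
Proof.
elim: r => [//|f r IH] /=.
case Hf: (distributing (gtgt f)) => /= H.
  by exists f, [::], r.
case: (IH H) => r1 [qt [r2 [-> [H1 H2]]]].
exists f, (r1 :: qt), r2; split => //; split => //=.
by rewrite Hf.
Qed.

Lemma dec_chain (A : eqType) (G : gww A) (q1 : gE G) q :
  path (@Rg A G) q1 q -> all (fun f => ~~ collecting (gsrc f)) q ->
  collecting (gtgt (last q1 q)) -> decw (q1 :: q) = gB (last q1 q).
Proof.
elim: q q1 => [|q2 q IH] q1 /=.
  by move=> _ _ Hc; rewrite /decw /= Hc /= cats0.
move=> /andP[/eqP Ht Hp] /andP[Hn Ha] Hc.
rewrite -IH //.
by rewrite {1}/decw /= Ht (negbTE Hn).
Qed.

Lemma inc_chain (A : eqType) (G : gww A) (r1 : gE G) qt :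
  path (@Rg A G) r1 qt -> all (fun f => ~~ distributing (gtgt f)) (belast r1 qt) ->
  incw qt = [::].
Proof.
elim: qt r1 => [//|q2 qt IH] r1 /= /andP[/eqP Ht Hp] /andP[Hn Ha].
rewrite /incw /= -Ht (negbTE Hn) /=.
exact: (IH q2 Hp Ha).
Qed.

Lemma align (A : eqType) (W : nat -> A) (G : gww A) (Hrs : is_rauzy_scheme W G)
  (s l : seq (gE G)) (x y : seq A) : sym_path s -> sym_path l ->
  Fpath s = x ++ Fpath l ++ y ->
  exists p r, s = p ++ l ++ r /\ size (decw p) = size x.
Proof.
move=> Hs Hl HF.
have H4 : forall (s1 s2 : seq (gE G)) (k : nat), sym_path s1 -> sym_path s2 ->
    1 <= k -> occurs_k (Fpath s1) (Fpath s2) k -> occurs_k s1 s2 k.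
  by case: Hrs => _ [_ [_ [_ [_ [H4 _]]]]].
case: l Hl HF => [//|l1 l'] Hl HF.
set l := l1 :: l' in Hl HF *.
set Fs := Fpath s in HF *; set Fl := Fpath l in HF *.
pose J := [seq j <- iota 0 (size s - size l).+1 | take (size l) (drop j s) == l].
pose I := [seq i <- iota 0 (size Fs - size Fl).+1 | take (size Fl) (drop i Fs) == Fl].
have occJ : occ l s = size J by rewrite /J size_filter.
have occI : occ Fl Fs = size I by rewrite /I size_filter.
have decJ : forall j, j \in J -> s = take j s ++ l ++ drop (j + size l) s.
  move=> j; rewrite mem_filter => /andP[/eqP Ht _].
  rewrite -{1}(cat_take_drop j s) -{1}(cat_take_drop (size l) (drop j s)) Ht.
  by rewrite drop_drop addnC.
pose pos j := size (decw (take j s)).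
have posI : forall j, j \in J -> pos j \in I.
  move=> j Hj; have Hs' := decJ j Hj.
  have E : Fs = decw (take j s) ++ Fl ++ incw (drop (j + size l) s).
    rewrite /Fs {1}Hs' (F_decomp Hrs) //; by rewrite -Hs'.
  rewrite mem_filter mem_iota E drop_size_cat // take_size_cat // eqxx /=.
  rewrite /pos !size_cat; lia.
have strict : forall j1 j2, j1 < j2 -> j2 \in J -> pos j1 < pos j2.
  move=> j1 j2 lt12 Hj2; have Hs' := decJ j2 Hj2.
  have lt2 : j2 < size s.
    case: (ltnP j2 (size s)) => // Hge.
    move: Hs'; rewrite take_oversize // => /(congr1 size); rewrite !size_cat /=; lia.
  have Hnth : forall x0, nth x0 s j2 = l1.
    move=> x0; rewrite {1}Hs' nth_cat size_takel ?ltnn ?subnn //; exact: ltnW.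
  case: j2 lt12 Hj2 Hs' lt2 Hnth => [//|k] lt12 Hj2 Hs' lt2 Hnth.
  rewrite /pos; clear decJ posI Hj2 HF occJ occI.
  case: s Hs Hs' lt2 Hnth {J I pos Fs} => [//|e0 s'] Hs Hs' lt2 Hnth.
  have Hpath : path (@Rg A G) e0 s' by case/and3P: Hs.
  have Hk : k < size s' by [].
  have := (pathP e0 Hpath) k Hk.
  have -> : nth e0 s' k = l1 by have := Hnth e0.
  move=> /eqP Ht.
  rewrite (take_nth e0 (ltnW lt2)) -cats1 decw_cat size_cat.
  have Hc : collecting (gtgt (nth e0 (e0 :: s') k)) by rewrite Ht; case/and3P: Hl.
  have -> : decw [:: nth e0 (e0 :: s') k] = gB (nth e0 (e0 :: s') k).
    by rewrite /decw /= Hc /= cats0.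
  have Hb := B_nonempty Hrs Hc.
  have Hle : size (decw (take j1 (e0 :: s'))) <= size (decw (take k (e0 :: s'))).
    by rewrite -(subnKC (lt12 : j1 <= k)) takeD decw_cat size_cat leq_addr.
  move: Hb; rewrite -size_eq0; lia.
have inj : {in J &, injective pos}.
  move=> j1 j2 H1 H2 E; case: (ltngtP j1 j2) => // H.
    by have := strict j1 j2 H H2; rewrite E ltnn.
  by have := strict j2 j1 H H1; rewrite E ltnn.
have uJ : uniq J by rewrite filter_uniq // iota_uniq.
have uI : uniq I by rewrite filter_uniq // iota_uniq.
have sub : {subset map pos J <= I} by move=> i /mapP[j Hj ->]; exact: posI.
have x_in : size x \in I.
  rewrite mem_filter mem_iota HF drop_size_cat // take_size_cat // eqxx /=.
  rewrite !size_cat; lia.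
have uM : uniq (map pos J) by rewrite map_inj_in_uniq.
have le2 : size I <= size (map pos J).
  rewrite size_map -occI -occJ; apply: H4 => //.
    rewrite occI lt0n size_eq0; apply/eqP => E0; by rewrite E0 in x_in.
  by rewrite /occurs_k.
have [_ eqIJ] := uniq_min_size uM sub le2.
rewrite -eqIJ in x_in; case/mapP: x_in => j Hj Ex.
exists (take j s), (drop (j + size l) s); split; [exact: decJ | by rewrite Ex].
Qed.

Lemma sym_last (A : eqType) (G : gww A) (p q : seq (gE G)) q1 :
  sym_path (p ++ q1 :: q) -> distributing (gtgt (last q1 q)).
Proof.
case: p => [|e p]; first by case/and3P.
rewrite cat_cons !sym_path_cons last_cat /=.
by case/and3P.
Qed.

Lemma sym_is_path (A : eqType) (G : gww A) (s : seq (gE G)) : sym_path s -> is_path s.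
Proof. by case: s => [//|e s] /and3P[]. Qed.

Lemma right_step (A : eqType) (W : nat -> A) (G : gww A) (Hrs : is_rauzy_scheme W G)
  (u : seq A) c (l1 : gE G) l' y :
  factor W (rcons u c) -> sym_path (l1 :: l') -> u = Fpath (l1 :: l') ++ y -> y != [::] ->
  (exists (l2 : seq (gE G)) y2, sym_path l2 /\ u = Fpath l2 ++ y2 /\ size y2 < size y) \/
  (exists e Z, gsrc e = gtgt (last l1 l') /\ gF e = y ++ c :: Z).
Proof.
move=> Hfac Hl Hu Hy.
have H6 : forall u, factor W u -> exists s : seq (gE G), sym_path s /\ subword u (Fpath s).
  by case: Hrs => _ [_ [_ [_ [_ [_ [_ [H6 _]]]]]]].
case: (H6 _ Hfac) => s [Hs /subwordP [X [Y HX]]].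
have HX' : Fpath s = X ++ Fpath (l1 :: l') ++ (y ++ c :: Y).
  by rewrite HX cat_rcons Hu; set Fl := Fpath _; rewrite -!catA.
clear HX; rename HX' into HX.
have [p [r [Es Ep]]] := align Hrs Hs Hl HX.
have HF2 : Fpath s = decw p ++ Fpath (l1 :: l') ++ incw r.
  by rewrite {1}Es (F_decomp Hrs) // -Es.
rewrite HF2 in HX.
have [_ HX2] := cat_cancel Ep HX.
have [_ Hr] := cat_cancel (erefl (size (Fpath (l1 :: l')))) HX2.
clear HF2 HX HX2.
case: r Es Hr => [|r0 r'] Es Hr.
  by move: Hr => /(congr1 size); rewrite size_cat /=; lia.
have Hhas : has (fun f => distributing (gtgt f)) (r0 :: r').
  apply/hasP; exists (last r0 r'); first exact: mem_last.
  by apply: (@sym_last _ _ (p ++ l1 :: l')); rewrite -catA -Es.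
have [r1 [qt [r2 [Er [Hd Ha]]]]] := split_first_dist Hhas.
rewrite Er in Es Hr.
have Hp1 : path (@Rg A G) l1 (l' ++ r1 :: qt).
  apply: (@path_mid _ _ p _ r2).
  have -> : p ++ (l1 :: l' ++ r1 :: qt) ++ r2 = s by rewrite Es /= -catA.
  exact: sym_is_path.
have Hlink : gsrc r1 = gtgt (last l1 l').
  by move: Hp1; rewrite cat_path /= => /and3P[_ /eqP -> _].
have Hp2 : path (@Rg A G) r1 qt.
  by move: Hp1; rewrite cat_path /= => /and3P[_ _ ->].
have Hdr1 : distributing (gsrc r1) by rewrite Hlink; case/and3P: Hl.
have Hinc : incw (r1 :: qt) = gF r1.
  rewrite /incw /= Hdr1 /=. by rewrite -/(incw qt) (inc_chain Hp2 Ha) cats0.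
rewrite incw_cat Hinc in Hr.
have HFn := F_nonempty Hrs Hdr1.
case: (leqP (size (gF r1)) (size y)) => Hle.
  have [z Ez] := cat_prefix Hle Hr.
  left; exists (l1 :: l' ++ r1 :: qt), z; split; [|split].
  - apply: (@sym_infix _ _ p _ r2).
      by have -> : p ++ (l1 :: l' ++ r1 :: qt) ++ r2 = s by rewrite Es /= -catA.
      by case/and3P: Hl.
    by rewrite last_cat.
  - by rewrite Hu -cat_cons (Fpath_cat _ (isT : (l1 :: l') != [::])) Hinc Ez catA.
  - move: HFn; rewrite -size_eq0 Ez size_cat; lia.
have [w Ew] := cat_prefix (ltnW Hle) (esym Hr).
rewrite Ew -catA in Hr.
have [_ Hr'] := cat_cancel (erefl (size y)) Hr.
clear Hr; case: w Ew Hr' => [|w0 Z] Ew Hr'.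
  by move: Hle; rewrite Ew cats0 ltnn.
case: Hr' => Hw0 _.
right; exists r1, Z; split => //; by rewrite Ew Hw0.
Qed.

Lemma left_step (A : eqType) (W : nat -> A) (G : gww A) (Hrs : is_rauzy_scheme W G)
  (u : seq A) c (l1 : gE G) l' x y :
  factor W (c :: u) -> sym_path (l1 :: l') -> u = x ++ Fpath (l1 :: l') ++ y -> x != [::] ->
  (exists (l2 : seq (gE G)) x2 y2, sym_path l2 /\ u = x2 ++ Fpath l2 ++ y2 /\ size x2 < size x) \/
  (exists e Z, gtgt e = gsrc l1 /\ gB e = Z ++ c :: x).
Proof.
move=> Hfac Hl Hu Hx.
have H6 : forall u, factor W u -> exists s : seq (gE G), sym_path s /\ subword u (Fpath s).
  by case: Hrs => _ [_ [_ [_ [_ [_ [_ [H6 _]]]]]]].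
case: (H6 _ Hfac) => s [Hs /subwordP [X [Y HX]]].
have HX' : Fpath s = (X ++ c :: x) ++ Fpath (l1 :: l') ++ (y ++ Y).
  by rewrite HX Hu; set Fl := Fpath _; rewrite -!catA /= -!catA.
have [p [r [Es Ep]]] := align Hrs Hs Hl HX'.
have HF2 : Fpath s = decw p ++ Fpath (l1 :: l') ++ incw r.
  by rewrite {1}Es (F_decomp Hrs) // -Es.
rewrite HF2 in HX'.
have [Hdp _] := cat_cancel Ep HX'.
clear HF2 HX'; case: p Es Ep Hdp => [|e0 p'] Es Ep Hdp.
  by move: Ep; rewrite /= size_cat /=; lia.
have Hhas : has (fun f => collecting (gsrc f)) (e0 :: p').
  by rewrite /= (_ : collecting (gsrc e0) = true) //; move: Hs; rewrite Es cat_cons; case/and3P.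
have [p1 [q1 [q [Ep1 [Hcq1 Hall]]]]] := split_last_coll Hhas.
rewrite Ep1 in Es Hdp.
have Hp : path (@Rg A G) q1 (q ++ l1 :: l' ++ r).
  apply: (@path_mid _ _ p1 _ [::]); rewrite cats0.
  have -> : p1 ++ (q1 :: q ++ l1 :: l' ++ r) = s by rewrite Es -catA.
  exact: sym_is_path.
move: Hp; rewrite cat_path /= => /and3P[Hpq /eqP Hlink _].
have Hcl : collecting (gsrc l1) by case/and3P: Hl.
have Hdec : decw (q1 :: q) = gB (last q1 q).
  by apply: dec_chain => //; rewrite Hlink.
rewrite decw_cat Hdec in Hdp.
have HBn : gB (last q1 q) != [::] by apply: (B_nonempty Hrs); rewrite Hlink.
case: (leqP (size (decw p1)) (size X)) => Hle.
  have [Z EZ] := cat_prefix Hle Hdp.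
  rewrite EZ -catA in Hdp.
  have [_ HB] := cat_cancel (erefl _) Hdp.
  by right; exists (last q1 q), Z.
have Hle' : size (X ++ [:: c]) <= size (decw p1) by rewrite size_cat /=; lia.
have Hdp' : decw p1 ++ gB (last q1 q) = (X ++ [:: c]) ++ x by rewrite Hdp -catA.
have [x1 Ex1] := cat_prefix Hle' (esym Hdp').
rewrite Ex1 -catA in Hdp'.
have [_ Hx1] := cat_cancel (erefl _) Hdp'.
left; exists (q1 :: q ++ l1 :: l'), x1, y; split; [|split].
- apply: (@sym_infix _ _ p1 _ r) => //; first by have -> : p1 ++ (q1 :: q ++ l1 :: l') ++ r = s by rewrite Es /= -!catA.
  by rewrite last_cat /=; case/and3P: Hl.
- have HFd : Fpath ((q1 :: q) ++ (l1 :: l') ++ [::]) = decw (q1 :: q) ++ Fpath (l1 :: l') ++ incw ([::] : seq (gE G)).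
    apply: (@F_decomp _ _ _ Hrs (q1 :: q) (l1 :: l') [::]) => //; rewrite cats0.
    apply: (@sym_infix _ _ p1 _ r) => //; first by have -> : p1 ++ (q1 :: q ++ l1 :: l') ++ r = s by rewrite Es /= -!catA.
    by rewrite last_cat /=; case/and3P: Hl.
  move: HFd; rewrite cats0 cat_cons => ->.
  by rewrite Hdec /incw /= cats0 Hu -Hx1 -!catA.
- move: HBn; rewrite -size_eq0 -Hx1 size_cat; lia.
Qed.

Lemma ohead_rev_cat (T : eqType) (s t : seq T) (z : T) :
  ohead (rev (s ++ z :: t)) = Some (last z t).
Proof. by rewrite (lastI z t) -rcons_cat rev_rcons. Qed.

Theorem mainTheorem7 (A : eqType) (W : nat -> A) (G : gww A) :
  is_rauzy_scheme W G -> recurrent W ->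
  forall u : seq A, bispecial W u ->
  (exists l1 : seq (gE G), sym_path l1 /\ subword (Fpath l1) u) ->
  exists l : seq (gE G), sym_path l /\ Fpath l = u.
Proof.
move=> Hrs _ u [[a [b [Hab [Ha Hb]]]] [a' [b' [Hab' [Ha' Hb']]]]] [l0 [Hl0 /subwordP [x [y Hu]]]].
have H2a : forall e1 e2 : gE G, e1 != e2 -> gsrc e1 = gsrc e2 -> distributing (gsrc e1) ->
    diff_first (gF e1) (gF e2) by case: Hrs => _ [_ [H2a _]].
have H2b : forall e1 e2 : gE G, e1 != e2 -> gtgt e1 = gtgt e2 -> collecting (gtgt e1) ->
    diff_last (gB e1) (gB e2) by case: Hrs => _ [_ [_ [H2b _]]].
have step2 : forall n (l1 : gE G) l' y, size y = n -> sym_path (l1 :: l') ->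
    u = Fpath (l1 :: l') ++ y -> exists l : seq (gE G), sym_path l /\ Fpath l = u.
  apply: ltn_ind => n IH l1 l' y0 Hn Hl Hu0.
  case: y0 Hn Hu0 => [|y1 y'] Hn Hu0.
    by exists (l1 :: l'); rewrite Hu0 cats0.
  have [[l2 [y2 [Hl2 [Hu2 Hs2]]]]|[ea [Za [Hea HFa]]]] := right_step Hrs Ha Hl Hu0 isT.
    case: l2 Hl2 Hu2 => [//|m1 m] Hl2 Hu2.
    by apply: (IH (size y2) _ m1 m y2) => //; rewrite -Hn.
  have [[l2 [y2 [Hl2 [Hu2 Hs2]]]]|[eb [Zb [Heb HFb]]]] := right_step Hrs Hb Hl Hu0 isT.
    case: l2 Hl2 Hu2 => [//|m1 m] Hl2 Hu2.
    by apply: (IH (size y2) _ m1 m y2) => //; rewrite -Hn.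
  have Hd : distributing (gsrc ea) by rewrite Hea; case/and3P: Hl.
  case: (eqVneq ea eb) => [Eab|Nab].
    move: HFb; rewrite -Eab HFa => /(cat_cancel (erefl _)) [_ [Eq _]].
    by move: Hab; rewrite Eq eqxx.
  have := H2a ea eb Nab (etrans Hea (esym Heb)) Hd.
  by rewrite HFa HFb /diff_first /= eqxx.
have step1 : forall n (l1 : gE G) l' x y, size x = n -> sym_path (l1 :: l') ->
    u = x ++ Fpath (l1 :: l') ++ y ->
    exists (m1 : gE G) m y', sym_path (m1 :: m) /\ u = Fpath (m1 :: m) ++ y'.
  apply: ltn_ind => n IH l1 l' x0 y0 Hn Hl Hu0.
  case: x0 Hn Hu0 => [|x1 x'] Hn Hu0.
    by exists l1, l', y0.
  have [[l2 [x2 [y2 [Hl2 [Hu2 Hs2]]]]]|[ea [Za [Hea HBa]]]] := left_step Hrs Ha' Hl Hu0 isT.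
    case: l2 Hl2 Hu2 => [//|m1 m] Hl2 Hu2.
    by apply: (IH (size x2) _ m1 m x2 y2) => //; rewrite -Hn.
  have [[l2 [x2 [y2 [Hl2 [Hu2 Hs2]]]]]|[eb [Zb [Heb HBb]]]] := left_step Hrs Hb' Hl Hu0 isT.
    case: l2 Hl2 Hu2 => [//|m1 m] Hl2 Hu2.
    by apply: (IH (size x2) _ m1 m x2 y2) => //; rewrite -Hn.
  have Hc : collecting (gtgt ea) by rewrite Hea; case/and3P: Hl.
  case: (eqVneq ea eb) => [Eab|Nab].
    move: HBb; rewrite -Eab HBa => E1.
    rewrite -(cat_rcons a') -(cat_rcons b') in E1.
    have Hsz : size (rcons Za a') = size (rcons Zb b').
      by move: (congr1 size E1); rewrite !size_cat !size_rcons; lia.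
    have [/rcons_inj [_ Eq] _] := cat_cancel Hsz E1.
    by move: Hab'; rewrite Eq eqxx.
  have := H2b ea eb Nab (etrans Hea (esym Heb)) Hc.
  by rewrite HBa HBb /diff_last /diff_first !ohead_rev_cat eqxx.
case: l0 Hl0 Hu => [//|l1 l'] Hl0 Hu.
have [m1 [m [y' [Hm Hum]]]] := step1 _ l1 l' x y erefl Hl0 Hu.
exact: (step2 _ m1 m y' erefl Hm Hum).
Qed.
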